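(* Let $V$ be a real vector space with a non-degenerate symmetric inner product of arbitrary signature, and let $\nabla R$ be a covariant derivative algebraic curvature tensor on $V$. If $\mathcal{S}_{\nabla R}(x)=0$ for all $x\in V$, then $\nabla R=0$.
   Context: A covariant derivative algebraic curvature tensor is $\nabla R\in\otimes^5V^*$ satisfying $\nabla R(a,b,c,d;e)=-\nabla R(b,a,c,d;e)=\nabla R(c,d,a,b;e)$, $\nabla R(a,b,c,d;e)+\nabla R(a,c,d,b;e)+\nabla R(a,d,b,c;e)=0$, and $\nabla R(a,b,c,d;e)+\nabla R(a,b,d,e;c)+\nabla R(a,b,e,c;d)=0$. The Szab\'o operator is defined by $(\mathcal{S}_{\nabla R}(x)y,w)=\nabla R(y,x,x,w;x)$. *)

(* Defs.v *)
From mathcomp Require Import all_boot all_order all_algebra.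
Set Implicit Arguments. Unset Strict Implicit. Unset Printing Implicit Defensive.
Import Order.TTheory GRing.Theory Num.Theory.
Local Open Scope ring_scope.

(* V = 'rV[R]_n (real finite-dim vector space, R : realFieldType, e.g. the reals).
   Inner product (x,y) := x *m G *m y^T with G symmetric and invertible
   (non-degenerate, arbitrary signature). *)
Definition ip (R : realFieldType) (n : nat) (G : 'M[R]_n) (x y : 'rV[R]_n) : R :=
  (x *m G *m y^T) 0 0.

(* An element of (V^* )^{(x)5}, given by its components in the standard basis. *)
Definition tensor5 (R : realFieldType) (n : nat) :=
  'I_n -> 'I_n -> 'I_n -> 'I_n -> 'I_n -> R.

Definition ev5 (R : realFieldType) (n : nat) (T : tensor5 R n)
  (a b c d e : 'rV[R]_n) : R :=
  \sum_i \sum_j \sum_k \sum_l \sum_m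
     a 0 i * b 0 j * c 0 k * d 0 l * e 0 m * T i j k l m.

Definition is_cov_deriv_act (R : realFieldType) (n : nat) (T : tensor5 R n) : Prop :=
  forall a b c d e : 'rV[R]_n,
    [/\ ev5 T a b c d e = - ev5 T b a c d e,
        ev5 T a b c d e = ev5 T c d a b e,
        ev5 T a b c d e + ev5 T a c d b e + ev5 T a d b c e = 0
      & ev5 T a b c d e + ev5 T a b d e c + ev5 T a b e c d = 0].

(* Szabo operator S(x) as a matrix acting on row vectors (y |-> y *m S(x)),
   characterized by (S(x)y, w) = T(y,x,x,w;x):
   S(x) = M(x) G^{-1} with M(x)_{ij} = T(e_i,x,x,e_j;x). *)
Definition szabo (R : realFieldType) (n : nat) (G : 'M[R]_n) (T : tensor5 R n)
  (x : 'rV[R]_n) : 'M[R]_n :=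
  (\matrix_(i, j) ev5 T (delta_mx 0 i) x x (delta_mx 0 j) x) *m invmx G.

(* Main.v *)
Require Import Defs.
From mathcomp Require Import all_boot all_order all_algebra.
From mathcomp Require Import ring lra.
From Stdlib Require Import FunctionalExtensionality.
Set Implicit Arguments. Unset Strict Implicit. Unset Printing Implicit Defensive.
Import Order.TTheory GRing.Theory Num.Theory.
Local Open Scope ring_scope.

Lemma key (R : realFieldType) (V : Type) (E : V->V->V->V->V->R)
 (Ha : forall a b c d e, E a b c d e + E b a c d e = 0)
 (Hp : forall a b c d e, E a b c d e - E c d a b e = 0)
 (H1 : forall a b c d e, E a b c d e + E a c d b e + E a d b c e = 0)
 (H2 : forall a b c d e, E a b c d e + E a b d e c + E a b e c d = 0)
 (HS : forall y a b c w, E y a b w c + E y a c w b + E y b a w c + E y b c w a + E y c a w b + E y c b w a = 0)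
 v0 v1 v2 v3 v4 : E v0 v1 v2 v3 v4 = 0.
Proof.
  have h0 := H1 v1 v0 v2 v3 v4.
  have h1 := Ha v0 v1 v2 v3 v4.
  have h2 := Hp v0 v2 v1 v3 v4.
  have h3 := Ha v1 v2 v0 v4 v3.
  have h4 := Hp v0 v4 v2 v1 v3.
  have h5 := H1 v0 v1 v2 v4 v3.
  have h6 := H2 v0 v3 v1 v4 v2.
  have h7 := Hp v0 v4 v1 v2 v3.
  have h8 := H2 v0 v1 v2 v4 v3.
  have h9 := Ha v1 v2 v0 v3 v4.
  have h10 := Hp v0 v3 v2 v1 v4.
  have h11 := H2 v1 v3 v0 v4 v2.
  have h12 := H1 v1 v0 v3 v2 v4.
  have h13 := Hp v1 v2 v3 v0 v4.
  have h14 := Ha v0 v3 v1 v2 v4.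
  have h15 := H1 v0 v2 v4 v3 v1.
  have h16 := H2 v0 v3 v1 v2 v4.
  have h17 := Hp v0 v4 v1 v3 v2.
  have h18 := H2 v0 v1 v2 v3 v4.
  have h19 := H1 v0 v1 v3 v4 v2.
  have h20 := H1 v0 v1 v3 v2 v4.
  have h21 := H2 v1 v2 v0 v4 v3.
  have h22 := HS v0 v1 v3 v4 v2.
  have h23 := H1 v0 v1 v2 v3 v4.
  have h24 := H2 v0 v2 v1 v4 v3.
  have h25 := Hp v0 v3 v1 v2 v4.
  have h26 := H1 v1 v2 v3 v4 v0.
  have h27 := H2 v1 v2 v0 v3 v4.
  have h28 := Hp v0 v2 v1 v4 v3.
  have h29 := H1 v0 v1 v4 v2 v3.
  have h30 := Hp v1 v2 v4 v0 v3.
  have h31 := Ha v0 v4 v1 v2 v3.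
  have h32 := Ha v0 v1 v4 v3 v2.
  have h33 := H2 v0 v2 v1 v3 v4.
  have h34 := H1 v0 v2 v3 v4 v1.
  have h35 := Ha v0 v1 v4 v2 v3.
  have h36 := HS v1 v0 v2 v4 v3.
  have h37 := Hp v0 v3 v1 v4 v2.
  have h38 := HS v0 v1 v2 v4 v3.
  have h39 := HS v1 v0 v3 v4 v2.
  have h40 := H2 v1 v3 v0 v2 v4.
  have h41 := H1 v1 v2 v4 v3 v0.
  have h42 := H1 v1 v0 v3 v4 v2.
  have h43 := Ha v0 v1 v3 v4 v2.
  have h44 := Ha v0 v1 v3 v2 v4.
  have h45 := H1 v1 v0 v2 v4 v3.
  have h46 := Ha v0 v1 v2 v4 v3.
  have -> : E v0 v1 v2 v3 v4 =
    (- (5%:R / 6%:R)) * (E v1 v0 v2 v3 v4 + E v1 v2 v3 v0 v4 + E v1 v3 v0 v2 v4)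
    + (11%:R / 12%:R) * (E v0 v1 v2 v3 v4 + E v1 v0 v2 v3 v4)
    + (- (2%:R / 3%:R)) * (E v0 v2 v1 v3 v4 - E v1 v3 v0 v2 v4)
    + (- (1%:R / 3%:R)) * (E v1 v2 v0 v4 v3 + E v2 v1 v0 v4 v3)
    + (- (1%:R / 3%:R)) * (E v0 v4 v2 v1 v3 - E v2 v1 v0 v4 v3)
    + (- (1%:R / 12%:R)) * (E v0 v1 v2 v4 v3 + E v0 v2 v4 v1 v3 + E v0 v4 v1 v2 v3)
    + (1%:R / 6%:R) * (E v0 v3 v1 v4 v2 + E v0 v3 v4 v2 v1 + E v0 v3 v2 v1 v4)
    + (- (1%:R / 6%:R)) * (E v0 v4 v1 v2 v3 - E v1 v2 v0 v4 v3)
    + (- (1%:R / 6%:R)) * (E v0 v1 v2 v4 v3 + E v0 v1 v4 v3 v2 + E v0 v1 v3 v2 v4)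
    + (- (2%:R / 3%:R)) * (E v1 v2 v0 v3 v4 + E v2 v1 v0 v3 v4)
    + (- (2%:R / 3%:R)) * (E v0 v3 v2 v1 v4 - E v2 v1 v0 v3 v4)
    + (- (1%:R / 6%:R)) * (E v1 v3 v0 v4 v2 + E v1 v3 v4 v2 v0 + E v1 v3 v2 v0 v4)
    + (1%:R / 6%:R) * (E v1 v0 v3 v2 v4 + E v1 v3 v2 v0 v4 + E v1 v2 v0 v3 v4)
    + (2%:R / 3%:R) * (E v1 v2 v3 v0 v4 - E v3 v0 v1 v2 v4)
    + (2%:R / 3%:R) * (E v0 v3 v1 v2 v4 + E v3 v0 v1 v2 v4)
    + (1%:R / 12%:R) * (E v0 v2 v4 v3 v1 + E v0 v4 v3 v2 v1 + E v0 v3 v2 v4 v1)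
    + (- (1%:R / 12%:R)) * (E v0 v3 v1 v2 v4 + E v0 v3 v2 v4 v1 + E v0 v3 v4 v1 v2)
    + (- (1%:R / 6%:R)) * (E v0 v4 v1 v3 v2 - E v1 v3 v0 v4 v2)
    + (- (1%:R / 6%:R)) * (E v0 v1 v2 v3 v4 + E v0 v1 v3 v4 v2 + E v0 v1 v4 v2 v3)
    + (1%:R / 12%:R) * (E v0 v1 v3 v4 v2 + E v0 v3 v4 v1 v2 + E v0 v4 v1 v3 v2)
    + (1%:R / 2%:R) * (E v0 v1 v3 v2 v4 + E v0 v3 v2 v1 v4 + E v0 v2 v1 v3 v4)
    + (1%:R / 6%:R) * (E v1 v2 v0 v4 v3 + E v1 v2 v4 v3 v0 + E v1 v2 v3 v0 v4)
    + (- (1%:R / 12%:R)) * (E v0 v1 v3 v2 v4 + E v0 v1 v4 v2 v3 + E v0 v3 v1 v2 v4 + E v0 v3 v4 v2 v1 + E v0 v4 v1 v2 v3 + E v0 v4 v3 v2 v1)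
    + (1%:R / 6%:R) * (E v0 v1 v2 v3 v4 + E v0 v2 v3 v1 v4 + E v0 v3 v1 v2 v4)
    + (- (1%:R / 6%:R)) * (E v0 v2 v1 v4 v3 + E v0 v2 v4 v3 v1 + E v0 v2 v3 v1 v4)
    + (- (2%:R / 3%:R)) * (E v0 v3 v1 v2 v4 - E v1 v2 v0 v3 v4)
    + (1%:R / 12%:R) * (E v1 v2 v3 v4 v0 + E v1 v3 v4 v2 v0 + E v1 v4 v2 v3 v0)
    + (- (1%:R / 12%:R)) * (E v1 v2 v0 v3 v4 + E v1 v2 v3 v4 v0 + E v1 v2 v4 v0 v3)
    + (- (1%:R / 6%:R)) * (E v0 v2 v1 v4 v3 - E v1 v4 v0 v2 v3)
    + (1%:R / 3%:R) * (E v0 v1 v4 v2 v3 + E v0 v4 v2 v1 v3 + E v0 v2 v1 v4 v3)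
    + (1%:R / 3%:R) * (E v1 v2 v4 v0 v3 - E v4 v0 v1 v2 v3)
    + (1%:R / 3%:R) * (E v0 v4 v1 v2 v3 + E v4 v0 v1 v2 v3)
    + (1%:R / 12%:R) * (E v0 v1 v4 v3 v2 + E v1 v0 v4 v3 v2)
    + (1%:R / 12%:R) * (E v0 v2 v1 v3 v4 + E v0 v2 v3 v4 v1 + E v0 v2 v4 v1 v3)
    + (- (1%:R / 12%:R)) * (E v0 v2 v3 v4 v1 + E v0 v3 v4 v2 v1 + E v0 v4 v2 v3 v1)
    + (- (1%:R / 12%:R)) * (E v0 v1 v4 v2 v3 + E v1 v0 v4 v2 v3)
    + (- (1%:R / 12%:R)) * (E v1 v0 v2 v3 v4 + E v1 v0 v4 v3 v2 + E v1 v2 v0 v3 v4 + E v1 v2 v4 v3 v0 + E v1 v4 v0 v3 v2 + E v1 v4 v2 v3 v0)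
    + (- (1%:R / 6%:R)) * (E v0 v3 v1 v4 v2 - E v1 v4 v0 v3 v2)
    + (1%:R / 12%:R) * (E v0 v1 v2 v3 v4 + E v0 v1 v4 v3 v2 + E v0 v2 v1 v3 v4 + E v0 v2 v4 v3 v1 + E v0 v4 v1 v3 v2 + E v0 v4 v2 v3 v1)
    + (1%:R / 12%:R) * (E v1 v0 v3 v2 v4 + E v1 v0 v4 v2 v3 + E v1 v3 v0 v2 v4 + E v1 v3 v4 v2 v0 + E v1 v4 v0 v2 v3 + E v1 v4 v3 v2 v0)
    + (1%:R / 12%:R) * (E v1 v3 v0 v2 v4 + E v1 v3 v2 v4 v0 + E v1 v3 v4 v0 v2)
    + (- (1%:R / 12%:R)) * (E v1 v2 v4 v3 v0 + E v1 v4 v3 v2 v0 + E v1 v3 v2 v4 v0)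
    + (- (1%:R / 12%:R)) * (E v1 v0 v3 v4 v2 + E v1 v3 v4 v0 v2 + E v1 v4 v0 v3 v2)
    + (1%:R / 12%:R) * (E v0 v1 v3 v4 v2 + E v1 v0 v3 v4 v2)
    + (- (1%:R / 4%:R)) * (E v0 v1 v3 v2 v4 + E v1 v0 v3 v2 v4)
    + (- (1%:R / 4%:R)) * (E v1 v0 v2 v4 v3 + E v1 v2 v4 v0 v3 + E v1 v4 v0 v2 v3)
    + (1%:R / 4%:R) * (E v0 v1 v2 v4 v3 + E v1 v0 v2 v4 v3) by field.
  by rewrite h0 h1 h2 h3 h4 h5 h6 h7 h8 h9 h10 h11 h12 h13 h14 h15 h16 h17 h18 h19 h20 h21 h22 h23 h24 h25 h26 h27 h28 h29 h30 h31 h32 h33 h34 h35 h36 h37 h38 h39 h40 h41 h42 h43 h44 h45 h46 !mulr0 !addr0.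
Qed.

Lemma ev5_nested (R : realFieldType) (n : nat) (T : tensor5 R n) a b c d e :
  ev5 T a b c d e = \sum_i a 0 i * \sum_j b 0 j * \sum_k c 0 k * \sum_l d 0 l *
     \sum_m e 0 m * T i j k l m.
Proof.
rewrite /ev5; apply: eq_bigr => i _; rewrite mulr_sumr; apply: eq_bigr => j _.
rewrite !mulr_sumr; apply: eq_bigr => k _; rewrite !mulr_sumr; apply: eq_bigr => l _.
rewrite !mulr_sumr; apply: eq_bigr => m _; by rewrite !mulrA.
Qed.

Lemma sum_delta (R : realFieldType) (n : nat) (F : 'I_n -> R) i0 :
  \sum_i (delta_mx 0 i0 : 'rV[R]_n) 0 i * F i = F i0.
Proof.
rewrite (bigD1 i0) //= mxE !eqxx mul1r big1 ?addr0 // => i /negbTE Hi.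
by rewrite mxE Hi andbF mul0r.
Qed.

Lemma ev5_delta (R : realFieldType) (n : nat) (T : tensor5 R n) i j k l m :
  ev5 T (delta_mx 0 i) (delta_mx 0 j) (delta_mx 0 k) (delta_mx 0 l) (delta_mx 0 m)
  = T i j k l m.
Proof. by rewrite ev5_nested !sum_delta. Qed.

Lemma ev5D2 (R : realFieldType) (n : nat) (T : tensor5 R n) a b b' c d e :
  ev5 T a (b + b') c d e = ev5 T a b c d e + ev5 T a b' c d e.
Proof.
rewrite /ev5 -big_split; apply: eq_bigr => i _; rewrite -big_split; apply: eq_bigr => j _.
rewrite -big_split; apply: eq_bigr => k _; rewrite -big_split; apply: eq_bigr => l _.
rewrite -big_split; apply: eq_bigr => m _; by rewrite mxE mulrDr !mulrDl.
Qed.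

Lemma ev5D3 (R : realFieldType) (n : nat) (T : tensor5 R n) a b c c' d e :
  ev5 T a b (c + c') d e = ev5 T a b c d e + ev5 T a b c' d e.
Proof.
rewrite /ev5 -big_split; apply: eq_bigr => i _; rewrite -big_split; apply: eq_bigr => j _.
rewrite -big_split; apply: eq_bigr => k _; rewrite -big_split; apply: eq_bigr => l _.
rewrite -big_split; apply: eq_bigr => m _; by rewrite mxE mulrDr !mulrDl.
Qed.

Lemma ev5D5 (R : realFieldType) (n : nat) (T : tensor5 R n) a b c d e e' :
  ev5 T a b c d (e + e') = ev5 T a b c d e + ev5 T a b c d e'.
Proof.
rewrite /ev5 -big_split; apply: eq_bigr => i _; rewrite -big_split; apply: eq_bigr => j _.
rewrite -big_split; apply: eq_bigr => k _; rewrite -big_split; apply: eq_bigr => l _.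
rewrite -big_split; apply: eq_bigr => m _; by rewrite mxE mulrDr !mulrDl.
Qed.

Theorem lemma3p2 (R : realFieldType) (n : nat) (G : 'M[R]_n) (T : tensor5 R n) :
  G^T = G -> G \in unitmx ->
  is_cov_deriv_act T ->
  (forall x : 'rV[R]_n, szabo G T x = 0) ->
  T = (fun _ _ _ _ _ => 0).
Proof.
move=> _ HG HT HS.
have P0 : forall y w (x : 'rV[R]_n),
    ev5 T (delta_mx 0 y) x x (delta_mx 0 w) x = 0.
  move=> y w x.
  have := HS x; rewrite /szabo => /(congr1 (fun M => M *m G)).
  rewrite -mulmxA mulVmx // mulmx1 mul0mx => /matrixP /(_ y w).
  by rewrite !mxE.
pose D := fun i : 'I_n => (delta_mx 0 i : 'rV[R]_n).
have HT' : forall a b c d e, [/\ T a b c d e = - T b a c d e,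
        T a b c d e = T c d a b e,
        T a b c d e + T a c d b e + T a d b c e = 0
      & T a b c d e + T a b d e c + T a b e c d = 0].
  by move=> a b c d e; have := HT (D a) (D b) (D c) (D d) (D e); rewrite /D !ev5_delta.
have K : forall a b c d e, T a b c d e = 0.
  apply: key.
  - by move=> a b c d e; case: (HT' a b c d e) => -> _ _ _; rewrite addNr.
  - by move=> a b c d e; case: (HT' a b c d e) => _ -> _ _; rewrite subrr.
  - by move=> a b c d e; case: (HT' a b c d e) => _ _ -> _.
  - by move=> a b c d e; case: (HT' a b c d e) => _ _ _ ->.
  - move=> y a b c w.
    have e1 := P0 y w (D a + D b + D c).
    have e2 := P0 y w (D a + D b).
    have e3 := P0 y w (D a + D c).
    have e4 := P0 y w (D b + D c).
    have e5 := P0 y w (D a).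
    have e6 := P0 y w (D b).
    have e7 := P0 y w (D c).
    rewrite !(ev5D2, ev5D3, ev5D5) /D !ev5_delta in e1 e2 e3 e4.
    rewrite /D !ev5_delta in e5 e6 e7.
    lra.
apply: functional_extensionality_dep => i.
apply: functional_extensionality_dep => j.
apply: functional_extensionality_dep => k.
apply: functional_extensionality_dep => l.
apply: functional_extensionality_dep => m.
exact: K.
Qed.
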